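(* Let $p$ be an integer with $1\le p\le13$. For $\eta\in\mathbf P^p([-1,1])$ with $\eta(-1)=0$, write $\eta=\sum_{m=1}^p\eta_m(L_m+L_{m-1})$ and define $$\Delta(\eta):=(2\eta(1)-3\eta_p)^2+p^2\Big(-4\|\eta\|^2_{L^2(-1,1)}+\frac{9\eta_p^2}{2p+1}\Big).$$ Then $\Delta(\eta)<0$ for every such $\eta$ that is not the null function.
   Context: $L_m$ are the Legendre polynomials: $L_0=1$, $L_1=x$, $(m+1)L_{m+1}=(2m+1)xL_m-mL_{m-1}$; $L_m(1)=1$, $L_m(-1)=(-1)^m$, so the polynomials $L_m+L_{m-1}$, $1\le m\le p$, form a basis of $\{\eta\in\mathbf P^p([-1,1]):\eta(-1)=0\}$ and the coefficients $\eta_m$ are uniquely determined. $\mathbf P^p([-1,1])$ is the space of real polynomials of degree at most $p$. *)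

(* Defs.v *)
From HB Require Import structures.
From mathcomp Require Import all_boot all_order all_algebra.
From mathcomp Require Import all_classical all_reals all_analysis.
Set Implicit Arguments. Unset Strict Implicit. Unset Printing Implicit Defensive.
Import Order.TTheory GRing.Theory Num.Theory.
Local Open Scope ring_scope.

(* legendre_pair n = (L_n, L_{n+1}) via the three-term recurrence
   (m+1) L_{m+1} = (2m+1) x L_m - m L_{m-1}. *)
Fixpoint legendre_pair (R : realType) (n : nat) : {poly R} * {poly R} :=
  match n with
  | 0%N => (1, 'X)
  | n'.+1 =>
      let: (a, b) := legendre_pair R n' in
      (b, (n'.+2)%:R^-1 *: ((2 * n'.+1 + 1)%:R *: ('X * b) - (n'.+1)%:R *: a))
  end.

Definition legendre (R : realType) (n : nat) : {poly R} := (legendre_pair R n).1.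

Definition L2sq (R : realType) (eta : {poly R}) : R :=
  Rintegral (@lebesgue_measure R) `[(-1)%R, 1%R]%classic (fun x => (eta.[x]) ^+ 2).

(* Delta(eta), where etap is the coefficient eta_p *)
Definition Delta (R : realType) (p : nat) (eta : {poly R}) (etap : R) : R :=
  (2 * eta.[1] - 3 * etap) ^+ 2
  + (p%:R) ^+ 2 * (- 4 * L2sq eta + 9 * etap ^+ 2 / (2 * p + 1)%:R).

(* Main.v *)
Require Import Defs.
From HB Require Import structures.
From mathcomp Require Import all_boot all_order all_algebra.
From mathcomp Require Import all_classical all_reals all_analysis.
From mathcomp Require Import ring lra zify.
Import Order.TTheory GRing.Theory Num.Theory.
Import numFieldNormedType.Exports.
Local Open Scope ring_scope.

Section Leg.
Variable R : realType.
Local Notation L := (legendre R).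

Lemma pair2 n : (legendre_pair R n).2 = L n.+1.
Proof. by rewrite /legendre /=; case: (legendre_pair R n). Qed.

Lemma L0 : L 0 = 1. Proof. by []. Qed.
Lemma L1 : L 1 = 'X. Proof. by []. Qed.

Lemma Lrec n : L n.+2 = (n.+2)%:R^-1 *: ((2 * n.+1 + 1)%:R *: ('X * L n.+1) - (n.+1)%:R *: L n).
Proof.
rewrite /legendre /=. case E: (legendre_pair R n) => [a b] /=.
have -> : a = L n by rewrite /legendre E.
have -> : b = L n.+1 by rewrite -pair2 E.
by [].
Qed.

Lemma LrecU m : (m.+1)%:R * L m.+1 = (2 * m + 1)%:R * ('X * L m) - m%:R * L m.-1.
Proof.
case: m => [|n]; first by rewrite L1 L0 !mul1r mul0r subr0 mulr1.
rewrite Lrec -!mul_polyC -!polyC_natr !mul_polyC scalerA mulfV ?scale1r //.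
Qed.
End Leg.
Arguments legendre : simpl never.
Opaque legendre.
Section Leg2.
Variable R : realType.
Local Notation L := (legendre R).

Lemma Lval n : (L n).[1] = 1 /\ (L n).[-1] = (-1) ^+ n.
Proof.
elim: n {-2}n (leqnn n) => [|N IH] n hn.
  by move: hn; rewrite leqn0 => /eqP ->; rewrite L0 !hornerE.
case: n hn => [|[|n]] hn; first by rewrite L0 !hornerE.
  by rewrite L1 !hornerE expr1.
have E := LrecU R n.+1; rewrite -!polyC_natr in E.
have E1 := congr1 (horner^~ 1) E; have E2 := congr1 (horner^~ (-1)) E.
have [h1 h2] := IH n.+1 hn.
have [h3 h4] := IH n (ltnW hn).
rewrite !(hornerCM, hornerD, hornerN, hornerM, hornerX) h1 h2 h3 h4 in E1 E2.
have nz : (n.+2)%:R != 0 :> R by rewrite pnatr_eq0.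
split.
  apply: (mulfI nz); rewrite E1 mulr1 !natrD !natrM !mulr1; lra.
apply: (mulfI nz); rewrite E2 !natrD !natrM !exprS; lra.
Qed.
End Leg2.


Opaque legendre.
Section Leg3.
Variable R : realType.
Local Notation L := (legendre R).

Lemma dRec n : (n.+2)%:R * (L n.+2)^`() =
   (2 * n.+1 + 1)%:R * (L n.+1 + 'X * (L n.+1)^`()) - (n.+1)%:R * (L n)^`().
Proof.
have E := LrecU R n.+1; rewrite -!polyC_natr in E.
have := congr1 (@deriv R) E; rewrite derivB !deriv_mulC derivM derivX mul1r.
by rewrite !polyC_natr.
Qed.

Lemma eq0E {T : nzRingType} {x y : T} : x = y -> x - y = 0.
Proof. by move=> ->; rewrite subrr. Qed.

Lemma I1ofJ1 n : 'X * (L n.+1)^`() - (L n)^`() = n.+1%:R * L n.+1 ->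
  (L n.+2)^`() - (L n)^`() = (2 * n.+1 + 1)%:R * L n.+1.
Proof.
move=> J1.
have nz : (n.+2)%:R != 0 :> {poly R}.
  by rewrite -polyC_natr polyC_eq0 pnatr_eq0.
apply: (mulfI nz); apply/eqP; rewrite -subr_eq0; apply/eqP.
have D := eq0E (dRec n); have J := eq0E J1.
have -> : (n.+2)%:R * ((L n.+2)^`() - (L n)^`()) -
    (n.+2)%:R * ((2 * n.+1 + 1)%:R * L n.+1) =
    ((n.+2)%:R * (L n.+2)^`() - ((2 * n.+1 + 1)%:R * (L n.+1 + 'X * (L n.+1)^`()) - (n.+1)%:R * (L n)^`()))
    + (2 * n.+1 + 1)%:R * ('X * (L n.+1)^`() - (L n)^`() - n.+1%:R * L n.+1).
  rewrite !natrD !natrM; ring.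
by rewrite D J mulr0 addr0.
Qed.

Lemma Lder n :
  ('X * (L n.+1)^`() - (L n)^`() = n.+1%:R * L n.+1) /\
  ((L n.+1)^`() - 'X * (L n)^`() = n.+1%:R * L n).
Proof.
elim: n => [|n [J1 J2]].
  rewrite L0 L1 derivX derivC; split; rewrite ?mulr1 ?mulr0 ?subr0 ?mul1r //.
have I1 := I1ofJ1 n J1.
have J2' := eq0E J2; have I1' := eq0E I1; have R2 := eq0E (LrecU R n.+1).
split; apply/eqP; rewrite -subr_eq0; apply/eqP.
  have -> : 'X * (L n.+2)^`() - (L n.+1)^`() - n.+2%:R * L n.+2 =
    'X * ((L n.+2)^`() - (L n)^`() - (2 * n.+1 + 1)%:R * L n.+1)
    - ((L n.+1)^`() - 'X * (L n)^`() - n.+1%:R * L n)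
    - (n.+2%:R * L n.+2 - ((2 * n.+1 + 1)%:R * ('X * L n.+1) - n.+1%:R * L n.+1.-1)).
    rewrite !natrD !natrM; ring.
  by rewrite I1' J2' R2 mulr0 !subr0.
have -> : (L n.+2)^`() - 'X * (L n.+1)^`() - n.+2%:R * L n.+1 =
  ((L n.+2)^`() - (L n)^`() - (2 * n.+1 + 1)%:R * L n.+1)
  - ('X * (L n.+1)^`() - (L n)^`() - n.+1%:R * L n.+1).
  rewrite !natrD !natrM; ring.
by rewrite I1' (eq0E J1) subr0.
Qed.

Lemma LderI n : (L n.+2)^`() - (L n)^`() = (2 * n.+1 + 1)%:R * L n.+1.
Proof. by apply: (I1ofJ1 n); case: (Lder n). Qed.
End Leg3.


Section Int.
Variable R : realType.

Definition prim (q : {poly R}) := \poly_(i < (size q).+1) (q`_i.-1 / i%:R).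

Lemma coef_prim q i : (prim q)`_i = q`_i.-1 / i%:R.
Proof.
rewrite coef_poly; case: ltnP => // hi.
by rewrite nth_default ?mul0r //; case: i hi.
Qed.

Lemma prim_deriv q : (prim q)^`() = q.
Proof.
apply/polyP => i; rewrite coef_deriv coef_prim -(mulr_natr (q`_i / i.+1%:R)) mulfVK ?pnatr_eq0 //.
Qed.

Lemma primD p q : prim (p + q) = prim p + prim q.
Proof. by apply/polyP => i; rewrite coefD !coef_prim coefD mulrDl. Qed.

Lemma primZ (c : R) q : prim (c *: q) = c *: prim q.
Proof. by apply/polyP => i; rewrite coefZ !coef_prim coefZ mulrA. Qed.

Definition Int (q : {poly R}) := (prim q).[1] - (prim q).[-1].

Lemma IntD p q : Int (p + q) = Int p + Int q.
Proof. rewrite /Int primD !hornerD; ring. Qed.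

Lemma IntZ c q : Int (c *: q) = c * Int q.
Proof. rewrite /Int primZ !hornerZ; ring. Qed.

Lemma Int0 : Int 0 = 0.
Proof. by have := IntZ 0 0; rewrite scale0r mul0r. Qed.

Lemma IntN q : Int (- q) = - Int q.
Proof. by rewrite -scaleN1r IntZ mulN1r. Qed.

Lemma IntB p q : Int (p - q) = Int p - Int q.
Proof. by rewrite IntD IntN. Qed.

Lemma Int_sum I (r : seq I) (P : pred I) (F : I -> {poly R}) :
  Int (\sum_(i <- r | P i) F i) = \sum_(i <- r | P i) Int (F i).
Proof. exact: (big_morph _ IntD Int0). Qed.

Lemma Int_deriv q : Int (q^`()) = q.[1] - q.[-1].
Proof.
rewrite /Int.
have -> : prim (q^`()) = q - (q`_0)%:P.
  apply/polyP => i; rewrite coef_prim coefB coefC; case: i => [|i] /=.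
    by rewrite invr0 mulr0 subrr.
  by rewrite coef_deriv subr0 -(mulr_natr q`_i.+1) mulfK // pnatr_eq0.
rewrite !hornerD !hornerN !hornerC; ring.
Qed.

Lemma Int1 : Int 1 = 2.
Proof. by rewrite -(derivX R) Int_deriv !hornerX opprK. Qed.

Lemma Rint_poly q :
  Rintegral (@lebesgue_measure R) `[(-1)%R, 1%R]%classic (fun x => q.[x]) = Int q.
Proof.
rewrite /Rintegral (@continuous_FTC2 _ _ (horner (prim q))).
- by rewrite /Int -EFinD.
- lra.
- exact/continuous_subspaceT/continuous_horner.
- split=> [x _| |].
  + exact: derivable_horner.
  + by apply: cvg_at_right_filter; exact: continuous_horner.
  + by apply: cvg_at_left_filter; exact: continuous_horner.
- by move=> x _; rewrite -derivE prim_deriv.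
Qed.

Lemma L2sqE eta : L2sq eta = Int (eta ^+ 2).
Proof.
rewrite /L2sq -Rint_poly; congr Rintegral; apply/funext => x.
by rewrite horner_exp.
Qed.
End Int.

Opaque legendre.
Section Orth.
Variable R : realType.
Local Notation L := (legendre R).
Local Notation Int := (@Int R).

Lemma IntMn n (p : {poly R}) : Int (n%:R * p) = n%:R * Int p.
Proof. by rewrite -polyC_natr mul_polyC IntZ. Qed.

Lemma IntL0 : Int (L 0) = 2.
Proof. by rewrite L0 Int1. Qed.

Lemma IntLS m : Int (L m.+1) = 0.
Proof.
have h := congr1 Int (LderI R m).
rewrite IntB !Int_deriv IntMn !(proj1 (Lval R _)) !(proj2 (Lval R _)) in h.
have nz : (2 * m.+1 + 1)%:R != 0 :> R by rewrite pnatr_eq0 addn1.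
apply: (mulfI nz); rewrite mulr0 -h !exprS; ring.
Qed.

Definition I n k := Int (L n * L k).
Definition dl (n k : nat) : R := if n == k then 2 / (2 * n + 1)%:R else 0.

Lemma dl_ne n k : n != k -> dl n k = 0.
Proof. by rewrite /dl => /negbTE ->. Qed.
Lemma dl_eq n : dl n n = 2 / (2 * n + 1)%:R.
Proof. by rewrite /dl eqxx. Qed.

Lemma stepA m k : m.+1%:R * I m.+1 k =
  (2 * m + 1)%:R * Int ('X * L m * L k) - m%:R * I m.-1 k.
Proof.
by rewrite /I -IntMn mulrA LrecU mulrBl IntB -!mulrA !IntMn !mulrA.
Qed.

Lemma stepB m k : (2 * k + 1)%:R * Int ('X * L m * L k) =
  k.+1%:R * I m k.+1 + k%:R * I m k.-1.
Proof.
rewrite /I -IntMn -!IntMn -IntD; congr Int.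
rewrite [X in _ = X](_ : _ = L m * (k.+1%:R * L k.+1 + k%:R * L k.-1)); last by ring.
have E := LrecU R k. have -> : k.+1%:R * L k.+1 + k%:R * L k.-1 = (2 * k + 1)%:R * ('X * L k).
  by rewrite E; ring.
ring.
Qed.

Ltac sidec m := repeat (apply/andP; split); (rewrite gt_eqF //; have := ler0n _ m; lra).

Lemma drec m k (X Y : R) :
  (2 * k + 1)%:R * X = k.+1%:R * dl m k.+1 + k%:R * dl m k.-1 ->
  m.+1%:R * Y = (2 * m + 1)%:R * X - m%:R * dl m.-1 k -> Y = dl m.+1 k.
Proof.
have [->|hk1] := eqVneq k m.+1.
  have nzk : (2 * m.+1 + 1)%:R != 0 :> R by rewrite pnatr_eq0 addn1.
  have nzm : m.+1%:R != 0 :> R by rewrite pnatr_eq0.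
  rewrite dl_ne; last by lia.
  rewrite /= dl_eq dl_ne; last by lia.
  rewrite dl_eq => HX HY.
  have hX : X = m.+1%:R * (2 / (2 * m + 1)%:R) / (2 * m.+1 + 1)%:R.
    by apply: (mulfI nzk); rewrite HX mulr0 add0r [RHS]mulrC mulfVK.
  apply: (mulfI nzm); rewrite HY hX mulr0 subr0.
  rewrite !natrD !natrM. field. sidec m.
have nzk : (2 * k + 1)%:R != 0 :> R by rewrite pnatr_eq0 addn1.
have nzm : m.+1%:R != 0 :> R by rewrite pnatr_eq0.
have [hk2|hk2] := eqVneq k.+1 m.
  subst m. rewrite dl_eq (dl_ne k.+1 k.-1); last by lia.
  rewrite /= dl_eq (dl_ne k.+2); last by lia.
  move=> HX HY.
  have hX : X = k.+1%:R * (2 / (2 * k.+1 + 1)%:R) / (2 * k + 1)%:R.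
    by apply: (mulfI nzk); rewrite HX mulr0 addr0 [RHS]mulrC mulfVK.
  apply: (mulfI nzm); rewrite HY hX mulr0.
  rewrite !natrD !natrM. field. sidec k.
move=> HX HY.
have h1 : k%:R * dl m k.-1 = 0.
  case: k hk1 hk2 {HX HY nzk} => [|k] hk1 hk2; first by rewrite mul0r.
  by rewrite dl_ne ?mulr0 //; lia.
have h2 : m%:R * dl m.-1 k = 0.
  case: m hk1 hk2 {HX HY nzm h1} => [|m] hk1 hk2; first by rewrite mul0r.
  by rewrite dl_ne ?mulr0 //; lia.
rewrite dl_ne in HX; last by lia.
rewrite dl_ne; last by lia.
rewrite h1 mulr0 addr0 in HX.
have hX : X = 0 by apply: (mulfI nzk); rewrite HX mulr0.
by apply: (mulfI nzm); rewrite HY h2 hX !mulr0 subr0.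
Qed.

Lemma orth_step m : (forall k, I m k = dl m k) -> (forall k, I m.-1 k = dl m.-1 k) ->
  forall k, I m.+1 k = dl m.+1 k.
Proof.
move=> H1 H2 k; apply: (drec m k (Int ('X * L m * L k))).
  by rewrite stepB !H1.
by rewrite stepA H2.
Qed.

Lemma orth0 k : I 0 k = dl 0 k.
Proof.
rewrite /I L0 mul1r; case: k => [|k]; first by rewrite Int1 dl_eq muln0 add0n divr1.
by rewrite IntLS dl_ne.
Qed.

Lemma orth n k : Int (L n * L k) = dl n k.
Proof.
suff H : forall n, (forall k, I n k = dl n k) /\ (forall k, I n.+1 k = dl n.+1 k).
  by case: (H n) => h _; exact: h.
move=> {n k}; elim=> [|n [H1 H2]].
  by split; [exact: orth0 | apply: orth_step; exact: orth0].
by split => //; apply: orth_step.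
Qed.
End Orth.


Section Key.
Variable R : realFieldType.

Lemma key (P S B N : R) : 1 <= P -> P <= 13 -> 0 < N ->
  (forall al ga : R, 2 * al * S + 2 * ga * B - P ^+ 2 * al ^+ 2 + 2 * P * al * ga - P ^+ 2 * ga ^+ 2 <= N) ->
  (2 * S + B) ^+ 2 + P ^+ 2 / (2 * P + 1) * B ^+ 2 < 8 * P ^+ 2 * N.
Proof.
move=> P1 P13 N0 H.
have u0 : 0 < 2 * P + 1 by lra.
have unz : 2 * P + 1 != 0 by rewrite gt_eqF.
set be := P ^+ 2 / (2 * P + 1).
have be0 : 0 < be by rewrite /be divr_gt0 // exprn_gt0 //; lra.
set A := 2 * S + B.
set lam := 8 * P ^+ 2.
have lam0 : 0 < lam by rewrite /lam mulr_gt0 // exprn_gt0 //; lra.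
have lnz : lam != 0 by rewrite gt_eqF.
set F := A ^+ 2 + be * B ^+ 2.
set Q := 4 * P ^+ 2 * A ^+ 2 - 4 * P * A * (A + be * B) + P ^+ 2 * (A + be * B) ^+ 2.
have H' := H (2 * A / lam) ((A + be * B) / lam).
have E : lam ^+ 2 * (2 * (2 * A / lam) * S + 2 * ((A + be * B) / lam) * B -
    P ^+ 2 * (2 * A / lam) ^+ 2 + 2 * P * (2 * A / lam) * ((A + be * B) / lam) -
    P ^+ 2 * ((A + be * B) / lam) ^+ 2) = 2 * lam * F - Q.
  rewrite /F /Q /A; field; exact lnz.
have h1 : 2 * lam * F - Q <= lam ^+ 2 * N.
  by rewrite -E ler_pM2l // exprn_gt0.
set c1 := 3 * P ^+ 2 + 4 * P.
have c10 : 0 < c1 by rewrite /c1; nra.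
set X := c1 * A + (2 * P * be - P ^+ 2 * be) * B.
set K := be * P ^+ 3 / (2 * P + 1) * 4 * (- P ^+ 3 + 12 * P ^+ 2 + 21 * P + 8).
have cub : 0 < - P ^+ 3 + 12 * P ^+ 2 + 21 * P + 8.
  have h2 : 0 <= P ^+ 2 * (13 - P) by rewrite mulr_ge0 ?sqr_ge0 //; lra.
  have h3 : 0 <= P * (13 - P) by rewrite mulr_ge0 //; lra.
  rewrite expr2 in h2; rewrite !exprS expr0 !mulr1; nra.
have K0 : 0 < K.
  rewrite /K; repeat apply: mulr_gt0; rewrite ?invr_gt0 ?exprn_gt0 //; lra.
have SOS : c1 * (lam * F - Q) = X ^+ 2 + K * B ^+ 2.
  rewrite /X /K /F /Q /c1 /lam /be; field; exact unz.
have [//|hF] := ltP F (lam * N).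
have hG : lam * F - Q <= 0.
  have : lam ^+ 2 * N <= lam * F by rewrite expr2 -mulrA ler_pM2l.
  lra.
have hG0 : X ^+ 2 + K * B ^+ 2 <= 0.
  by rewrite -SOS; rewrite pmulr_rle0.
have hB : B = 0.
  apply/eqP; rewrite -sqrf_eq0 eq_le sqr_ge0 andbT.
  have := sqr_ge0 X; have := sqr_ge0 B; nra.
have hX : X = 0.
  apply/eqP; rewrite -sqrf_eq0 eq_le sqr_ge0 andbT.
  move: hG0; rewrite hB expr0n /= mulr0 addr0 => //.
have hA : A = 0.
  move: hX; rewrite /X hB mulr0 addr0 => /eqP; rewrite mulf_eq0 gt_eqF //= => /eqP //.
move: hF; rewrite /F hA hB expr0n /= mulr0 addr0.
rewrite pmulr_rle0 //; lra.
Qed.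

Lemma sum_odd p : \sum_(k < p) (2 * k + 1)%:R = p%:R ^+ 2 :> R.
Proof.
elim: p => [|p IH]; first by rewrite big_ord0 expr0n.
rewrite big_ord_recr /= IH -(addn1 p) natrD natrM natrD; ring.
Qed.

Lemma sum_alt p : \sum_(k < p) (2 * k + 1)%:R * (-1) ^+ (p + k) = - p%:R :> R.
Proof.
elim: p => [|p IH]; first by rewrite big_ord0 oppr0.
rewrite big_ord_recr /=.
under eq_bigr do rewrite addSn exprS mulN1r mulrN.
rewrite sumrN IH addSn exprS addnn -mul2n mulnC exprM sqrr_sign -(addn1 p) natrD natrM natrD; ring.
Qed.
End Key.

Opaque legendre.
Section Rep.
Variable R : realType.
Local Notation L := (legendre R).

Definition ac (n : nat) (c : nat -> R) (k : nat) : R :=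
  (if (0 < k <= n)%N then c k else 0) + (if (k < n)%N then c k.+1 else 0).

Lemma acS n c k : (k < n.+1)%N -> ac n.+1 c k = ac n c k + (if k == n then c n.+1 else 0).
Proof.
move=> hk; rewrite /ac.
have -> : (0 < k <= n.+1)%N = (0 < k <= n)%N by case: k hk => //= k; lia.
rewrite hk; case: (ltngtP k n) => h.
- by rewrite addr0.
- lia.
- by rewrite h addr0.
Qed.

Lemma rep n (c : nat -> R) :
  \sum_(1 <= m < n.+1) c m *: (L m + L m.-1) = \sum_(k < n.+1) ac n c k *: L k.
Proof.
elim: n => [|n IH].
  by rewrite big_geq // big_ord_recr big_ord0 /= add0r /ac /= addr0 scale0r.
rewrite big_nat_recr //= IH [RHS]big_ord_recr /=.
have -> : ac n.+1 c n.+1 = c n.+1 by rewrite /ac ltnn leqnn /= addr0.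
rewrite [X in _ = X + _](eq_bigr (fun i : 'I_n.+1 => ac n c i *: L i + (if (i : nat) == n then c n.+1 else 0) *: L i)); last first.
  by move=> i _; rewrite acS // scalerDl.
rewrite big_split /= [X in _ = _ + X + _]big_ord_recr /= eqxx [X in _ = _ + (X + _) + _]big1; last first.
  by move=> i _; rewrite ltn_eqF // scale0r.
by rewrite add0r scalerDr addrA addrAC.
Qed.
End Rep.

Opaque legendre.

Theorem lemma10 (R : realType) (p : nat) (hp1 : (1 <= p)%N) (hp2 : (p <= 13)%N)
  (eta : {poly R}) (c : nat -> R) :
  (size eta <= p.+1)%N ->
  eta.[-1] = 0 ->
  eta = \sum_(1 <= m < p.+1) c m *: (legendre R m + legendre R m.-1) ->
  eta != 0 ->
  Delta p eta (c p) < 0.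
Proof.
move=> _ hm1 heta hnz.
have Erep : eta = \sum_(k < p.+1) ac R p c k *: legendre R k by rewrite heta rep.
set a := ac R p c.
have hap : a p = c p by rewrite /a /ac hp1 leqnn ltnn addr0.
have V1 : eta.[1] = \sum_(k < p.+1) a k.
  rewrite Erep horner_sum; apply: eq_bigr => k _.
  by rewrite hornerZ (proj1 (Lval R k)) mulr1.
have Vm1 : eta.[-1] = \sum_(k < p.+1) a k * (-1) ^+ k.
  rewrite Erep horner_sum; apply: eq_bigr => k _.
  by rewrite hornerZ (proj2 (Lval R k)).
have VI : Int R (eta ^+ 2) = \sum_(k < p.+1) a k ^+ 2 * (2 / (2 * k + 1)%:R).
  rewrite Erep expr2 mulr_suml Int_sum; apply: eq_bigr => i _.
  rewrite mulr_sumr Int_sum (bigD1 i) //= big1 ?addr0.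
    by rewrite -scalerAl -scalerAr !IntZ orth dl_eq mulrA -expr2.
  move=> j hji; rewrite -scalerAl -scalerAr !IntZ orth dl_ne ?mulr0 //.
  by rewrite eq_sym.
rewrite big_ord_recr /= in V1; rewrite big_ord_recr /= in Vm1; rewrite big_ord_recr /= in VI.
set S0 := \sum_(i < p) a i in V1.
set Bs := \sum_(i < p) a i * (-1) ^+ i in Vm1.
set N := \sum_(i < p) a i ^+ 2 * (2 / (2 * i + 1)%:R) in VI.
have hB : Bs + a p * (-1) ^+ p = 0 by rewrite -Vm1.
set N2 := \sum_(i < p) a i ^+ 2 / (2 * i + 1)%:R.
have hN : N = 2 * N2.
  rewrite /N /N2 mulr_sumr; apply: eq_bigr => i _; rewrite mulrCA.
  by [].
set P : R := p%:R.
have SOS : forall al ga : R, 2 * al * S0 + 2 * ga * (- a p) - P ^+ 2 * al ^+ 2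
    + 2 * P * al * ga - P ^+ 2 * ga ^+ 2 <= N2.
  move=> al ga.
  have h0 : 0 <= \sum_(i < p) (a i - (2 * i + 1)%:R * (al + ga * (-1) ^+ (p + i))) ^+ 2
      / (2 * i + 1)%:R.
    by apply: sumr_ge0 => i _; apply: divr_ge0; [exact: sqr_ge0 | exact: ler0n].
  have E : \sum_(i < p) (a i - (2 * i + 1)%:R * (al + ga * (-1) ^+ (p + i))) ^+ 2
      / (2 * i + 1)%:R = \sum_(i < p) (a i ^+ 2 / (2 * i + 1)%:R - 2 * al * a i
      - 2 * ga * (a i * (-1) ^+ (p + i)) + al ^+ 2 * (2 * i + 1)%:R
      + 2 * al * ga * ((2 * i + 1)%:R * (-1) ^+ (p + i)) + ga ^+ 2 * (2 * i + 1)%:R).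
    apply: eq_bigr => i _.
    have wnz : (2 * i + 1)%:R != 0 :> R by rewrite pnatr_eq0 addn1.
    have e2 : ((-1) ^+ (p + i)) ^+ 2 = 1 :> R by rewrite sqrr_sign.
    apply/eqP; rewrite -subr_eq0; apply/eqP.
    transitivity (ga ^+ 2 * (2 * i + 1)%:R * (((-1) ^+ (p + i)) ^+ 2 - 1)).
      by field.
    by rewrite e2 subrr mulr0.
  rewrite E !big_split /= !sumrN -!mulr_sumr sum_odd sum_alt in h0.
  have hA : \sum_(i < p) a i * (-1) ^+ (p + i) = (-1) ^+ p * Bs.
    rewrite /Bs mulr_sumr; apply: eq_bigr => i _; rewrite exprD mulrCA.
    by [].
  have hBs : (-1) ^+ p * Bs = - a p.
    have -> : Bs = - (a p * (-1) ^+ p) by lra.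
    by rewrite mulrN mulrCA -expr2 sqrr_sign mulr1.
  rewrite hA hBs in h0.
  rewrite -/N2 -/S0 -/P in h0.
  lra.
have N2pos : 0 < N2.
  have nn : forall i : 'I_p, true -> 0 <= a i ^+ 2 / (2 * i + 1)%:R.
    by move=> i _; apply: divr_ge0; [exact: sqr_ge0 | exact: ler0n].
  rewrite lt0r sumr_ge0 // andbT; apply/negP => /eqP N20.
  have az : forall i : 'I_p, a i = 0.
    move=> i; have := @psumr_eq0P _ _ _ _ nn N20 i isT.
    move/eqP; rewrite mulf_eq0 invr_eq0 pnatr_eq0 addn1 orbF sqrf_eq0.
    by move/eqP.
  have Bs0 : Bs = 0 by rewrite /Bs big1 // => i _; rewrite az mul0r.
  have ap0 : a p = 0.
    move: hB; rewrite Bs0 add0r => /eqP; rewrite mulf_eq0 signr_eq0 orbF.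
    by move/eqP.
  apply: (negP hnz); apply/eqP; rewrite Erep big1 // => i _.
  case: (ltnP i p) => h.
    by rewrite (_ : ac R p c i = 0) ?scale0r //; exact: (az (Ordinal h)).
  have -> : (i : nat) = p by have := ltn_ord i; lia.
  by rewrite (_ : ac R p c p = 0) ?scale0r //; exact: ap0.
have h1 : 1 <= P by rewrite /P ler1n.
have h13 : P <= 13 by rewrite /P ler_nat.
have hk := @key R P S0 (- a p) N2 h1 h13 N2pos SOS.
rewrite /Delta L2sqE VI hN V1 -hap natrD natrM -/P.
have u0 : 0 < 2 * P + 1 by lra.
have unz : 2 * P + 1 != 0 by rewrite gt_eqF.
have E : (2 * (S0 + a p) - 3 * a p) ^+ 2 +
   P ^+ 2 * (-4 * (2 * N2 + a p ^+ 2 * (2 / (2 * P + 1))) + 9 * a p ^+ 2 / (2 * P + 1))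
   = (2 * S0 + - a p) ^+ 2 + P ^+ 2 / (2 * P + 1) * (- a p) ^+ 2 - 8 * P ^+ 2 * N2.
  by field.
rewrite E; lra.
Qed.
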